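(* Let $q$ be a prime power, $d\ge 1$, let $B$ be a non-degenerate bilinear form on $\mathbb{F}_q^d$, and let $\lambda\in\mathbb{F}_q^{*}$. For every nonempty subset $V\subseteq\mathbb{F}_q^d$, \[ \sum_{\mathbf{v}\in\mathbb{F}_q^d}\Big(|N^{\lambda}_V(\mathbf{v})|-\frac{|V|}{q}\Big)^2 < q^{d-1}|V|. \]
   Context: $B:\mathbb{F}_q^d\times\mathbb{F}_q^d\to\mathbb{F}_q$ is bilinear and non-degenerate. For $\mathbf{v}\in\mathbb{F}_q^d$, $N^{\lambda}(\mathbf{v})=\{\mathbf{u}\in\mathbb{F}_q^d: B(\mathbf{v},\mathbf{u})=\lambda\}$, and for $V\subseteq\mathbb{F}_q^d$, $N^{\lambda}_V(\mathbf{v})=N^{\lambda}(\mathbf{v})\cap V$. $\mathbb{F}_q^*=\mathbb{F}_q\setminus\{0\}$. *)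

(* Defs.v *)
From HB Require Import structures.
From mathcomp Require Import all_boot all_order all_algebra all_field.
Set Implicit Arguments. Unset Strict Implicit. Unset Printing Implicit Defensive.
Import GRing.Theory Num.Theory.
Local Open Scope ring_scope.

Definition is_bilinear_form (F : fieldType) (d : nat) (B : 'rV[F]_d -> 'rV[F]_d -> F) : Prop :=
  (forall (a : F) (u1 u2 v : 'rV[F]_d), B (a *: u1 + u2) v = a * B u1 v + B u2 v) /\
  (forall (a : F) (u v1 v2 : 'rV[F]_d), B u (a *: v1 + v2) = a * B u v1 + B u v2).

Definition is_nondegenerate (F : fieldType) (d : nat) (B : 'rV[F]_d -> 'rV[F]_d -> F) : Prop :=
  (forall v, (forall u, B v u = 0) -> v = 0) /\
  (forall u, (forall v, B v u = 0) -> u = 0).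

Definition Nlam (F : finFieldType) (d : nat) (B : 'rV[F]_d -> 'rV[F]_d -> F)
  (lam : F) (v : 'rV[F]_d) : {set 'rV[F]_d} := [set u | B v u == lam].

Definition NlamV (F : finFieldType) (d : nat) (B : 'rV[F]_d -> 'rV[F]_d -> F)
  (lam : F) (V : {set 'rV[F]_d}) (v : 'rV[F]_d) : {set 'rV[F]_d} := Nlam B lam v :&: V.

(* Main.v *)
Require Import Defs.
From HB Require Import structures.
From mathcomp Require Import all_boot all_order all_algebra all_field.
Import GRing.Theory Num.Theory.
Local Open Scope ring_scope.
Set Implicit Arguments. Unset Strict Implicit.

Section Aux.
Variables (F : finFieldType) (d : nat) (B : 'rV[F]_d -> 'rV[F]_d -> F).
Hypothesis hB : is_bilinear_form B.
Hypothesis hN : is_nondegenerate B.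

Lemma B0l v : B 0 v = 0.
Proof.
have := hB.1 1 0 0 v; rewrite scale1r addr0 mul1r => e.
by apply: (@addIr _ (B 0 v)); rewrite add0r -e.
Qed.

Lemma B0r v : B v 0 = 0.
Proof.
have := hB.2 1 v 0 0; rewrite scale1r addr0 mul1r => e.
by apply: (@addIr _ (B v 0)); rewrite add0r -e.
Qed.

Lemma BZl a u v : B (a *: u) v = a * B u v.
Proof. by rewrite -[a *: u]addr0 hB.1 B0l addr0. Qed.

Lemma BDl u w v : B (u + w) v = B u v + B w v.
Proof. by rewrite -[u]scale1r hB.1 mul1r scale1r. Qed.

Lemma BBr v u w : B v (u - w) = B v u - B v w.
Proof.
by rewrite addrC -scaleN1r hB.2 mulN1r addrC.
Qed.

Lemma ker_card x : x != 0 -> (#|[set v | B v x == 0%R]| * #|F| = #|F| ^ d)%N.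
Proof.
move=> xnz.
have [w Hw] : exists w, B w x != 0.
  case: (boolP [exists w, B w x != 0]) => [/existsP//|/existsPn H].
  move/negP: xnz; case; apply/eqP; apply: hN.2 => v.
  by have := H v; rewrite negbK => /eqP.
set v0 := (B w x)^-1 *: w.
have Hv0 : B v0 x = 1 by rewrite BZl mulVf.
have fib t : #|[set v | B v x == t]| = #|[set v | B v x == 0%R]|.
  rewrite -[RHS](card_imset _ (addIr (t *: v0))); apply: eq_card => y.
  rewrite [in LHS]inE; apply/idP/imsetP => [/eqP Hy | [z]].
    exists (y - t *: v0); last by rewrite subrK.
    by rewrite inE BDl -scaleNr BZl Hv0 mulr1 Hy subrr.
  by rewrite inE => /eqP Hz ->; rewrite BDl BZl Hv0 mulr1 Hz add0r.
rewrite -[in RHS](mul1n d) -card_mx.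
have -> : #|{: 'M[F]_(1,d)}| = (\sum_t #|[set v | B v x == t]|)%N.
  rewrite -sum1_card (partition_big (fun v => B v x) predT) //=.
  apply: eq_bigr => t _; rewrite -sum1_card; apply: eq_bigl => v; rewrite inE.
  done.
under eq_bigr do rewrite fib.
by rewrite sum_nat_const mulnC; congr (_ * _)%N; apply: eq_card.
Qed.

Lemma sumr_constT (T : finType) (c : rat) : \sum_(t : T) c = c *+ #|T|.
Proof. by rewrite sumr_const; congr (_ *+ _); apply: eq_card. Qed.

Lemma sum_ind (T : finType) (P : pred T) :
  \sum_(v : T) ((P v : nat)%:R : rat) = (#|[set v | P v]|)%:R.
Proof.
rewrite -natr_sum; congr _%:R; rewrite -sum1_card [RHS]big_mkcond /=.
by apply: eq_bigr => v _; rewrite inE; case: (P v).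
Qed.

Hypothesis d1 : (1 <= d)%N.

Lemma qgt0 : (0 < #|F|)%N.
Proof. exact: ltnW (card_finNzRing_gt1 F). Qed.

Lemma qd_eq : (#|F| ^ d = #|F| ^ d.-1 * #|F|)%N.
Proof. by rewrite -expnSr prednK. Qed.

Lemma kerR x : \sum_(v : 'rV[F]_d) ((B v x == 0 : nat)%:R : rat) =
  (#|F| ^ d.-1)%:R + ((x == 0 : nat)%:R * (#|F| ^ d.-1 * #|F|.-1)%:R).
Proof.
rewrite sum_ind; case: eqP => [->|/eqP xnz].
  rewrite mul1r -natrD; congr _%:R.
  rewrite (_ : [set v | B v 0 == 0] = setT); last by apply/setP => v; rewrite !inE B0r eqxx.
  rewrite cardsT card_mx mul1n qd_eq.
  by rewrite -[X in (_ * X)%N = _](prednK qgt0) mulnS.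
rewrite (_ : (false : nat)%:R = 0 :> rat) // mul0r addr0; congr _%:R.
have := ker_card xnz; rewrite qd_eq => /eqP; rewrite eqn_pmul2r ?qgt0 //.
by move/eqP.
Qed.

End Aux.

Unset Implicit Arguments. Set Strict Implicit.
Theorem lemma2p1 (F : finFieldType) (d : nat) (B : 'rV[F]_d -> 'rV[F]_d -> F)
  (lam : F) (V : {set 'rV[F]_d}) :
  (1 <= d)%N ->
  is_bilinear_form B -> is_nondegenerate B ->
  lam != 0 ->
  V != set0 ->
  \sum_(v : 'rV[F]_d) ((#|NlamV B lam V v|)%:R - (#|V|)%:R / (#|F|)%:R) ^+ 2
    < ((#|F| ^ d.-1 * #|V|)%N)%:R :> rat.
Proof.
move=> d1 hB hN lnz Vn.
pose G v t : rat := \sum_(u in V) ((B v u == t : nat)%:R).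
have HN v : (#|NlamV B lam V v|)%:R = G v lam.
  rewrite /G -natr_sum; congr _%:R; rewrite -sum1_card big_mkcond /=.
  rewrite [RHS]big_mkcond /=; apply: eq_bigr => u _; rewrite !inE.
  by case: (u \in V); case: (B v u == lam).
under eq_bigr do rewrite HN.
have qpos : (0 < #|F|)%N := qgt0 F.
have qR : (#|F|%:R : rat) != 0 by rewrite pnatr_eq0 -lt0n.
set c := (#|V|%:R : rat) / #|F|%:R.
have cq : c *+ #|F| = #|V|%:R by rewrite -mulr_natr divfK.
pose S t := \sum_(v : 'rV[F]_d) (G v t - c) ^+ 2.
have Gsc a v t : a != 0 -> G (a *: v) (a * t) = G v t.
  by move=> anz; apply: eq_bigr => u _; rewrite (BZl hB) (inj_eq (mulfI anz)).
have St t : t != 0 -> S t = S lam.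
  move=> tnz; have anz : lam / t != 0 by rewrite mulf_neq0 ?invr_eq0.
  rewrite /S [RHS](reindex_inj (scalerI anz)); apply: eq_bigr => v _.
  by have := Gsc (lam / t) v t anz; rewrite divfK // => ->.
change (S lam < (#|F| ^ d.-1 * #|V|)%:R).
have sumG v : \sum_t G v t = #|V|%:R.
  rewrite /G exchange_big /= -[RHS]sumr_const; apply: eq_bigr => u _.
  rewrite (bigD1 (B v u)) //= eqxx big1 ?addr0 // => t /negbTE.
  by rewrite eq_sym => ->.
set Q1 : rat := (#|F| ^ d.-1)%:R.
set M : rat := (#|F| ^ d.-1 * #|F|.-1)%:R.
have SG2 : \sum_v \sum_t G v t ^+ 2 = (Q1 *+ #|V| + M) *+ #|V|.
  have e1 v : \sum_t G v t ^+ 2 =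
      \sum_(u in V) \sum_(w in V) ((B v (u - w) == 0 : nat)%:R : rat).
    under eq_bigr do rewrite expr2 /G mulr_suml.
    under eq_bigr do under eq_bigr do rewrite mulr_sumr.
    rewrite exchange_big /=; apply: eq_bigr => u _.
    rewrite exchange_big /=; apply: eq_bigr => w _.
    rewrite (BBr hB) subr_eq0 (bigD1 (B v u)) //= eqxx mul1r big1 ?addr0.
      by rewrite eq_sym.
    by move=> t tn; rewrite eq_sym (negbTE tn) mul0r.
  rewrite (eq_bigr _ (fun v _ => e1 v)) exchange_big /= -sumr_const.
  apply: eq_bigr => u uV; rewrite exchange_big /=.
  under eq_bigr do rewrite (kerR hB hN d1).
  rewrite big_split /= sumr_const (bigD1 u) //= subrr eqxx mul1r big1 ?addr0 //.
  by move=> w /andP[_ wu]; rewrite subr_eq0 eq_sym (negbTE wu) mul0r.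
have SC : \sum_t S t = M *+ #|V|.
  rewrite /S exchange_big /=.
  have e2 v : \sum_t (G v t - c) ^+ 2 = \sum_t G v t ^+ 2 - #|V|%:R * c.
    under eq_bigr do rewrite sqrrB.
    rewrite big_split /= sumrB sumrMnl -mulr_suml sumG sumr_constT.
    rewrite expr2 -[c * c *+ _]mulrnAr cq [c * _]mulrC.
    by rewrite mulr2n opprD addrA subrK.
  rewrite (eq_bigr _ (fun v _ => e2 v)) sumrB SG2 sumr_constT card_mx mul1n.
  rewrite (qd_eq F d1) mulnC mulrnA -mulrnAr cq.
  rewrite mulrnDl.
  have -> : Q1 *+ #|V| *+ #|V| = (#|V|%:R * #|V|%:R) *+ #|F| ^ d.-1.
    by rewrite -natrM /Q1 -!mulrnA mulnC.
  by rewrite [_ + M *+ _]addrC addrK.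
have q1 : (0 < #|F|.-1)%N by rewrite -subn1 subn_gt0 card_finNzRing_gt1.
have Nnz : (#|V|%:R : rat) != 0 by rewrite pnatr_eq0 -lt0n card_gt0.
have S0 : 0 < S 0.
  rewrite /S (bigD1 0) //=.
  apply: (@Order.POrderTheory.lt_le_trans _ _ ((G 0 0 - c) ^+ 2)); last first.
    by rewrite lerDl sumr_ge0 // => v _; exact: sqr_ge0.
  have -> : G 0 0 = #|V|%:R.
    rewrite /G -[RHS]sumr_const; apply: eq_bigr => u _.
    by rewrite (B0l hB) eqxx.
  rewrite lt0r sqr_ge0 andbT sqrf_eq0 subr_eq0; apply/eqP => e.
  move: cq; rewrite -e -[in X in X = _](prednK qpos) mulrS => /eqP.
  rewrite -subr_eq0 addrAC subrr add0r mulrn_eq0 (negbTE Nnz) orbF => /eqP q0.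
  by rewrite q0 in q1.
have SS : \sum_(t | t != 0) S t = S lam *+ #|F|.-1.
  rewrite (eq_bigr (fun _ => S lam)) // sumr_const; congr (_ *+ _).
  by rewrite -(cardC1 (0 : F)); apply: eq_card.
move: SC; rewrite (bigD1 0) //= SS => SC.
rewrite -(andTb (S lam < _)) -q1 -(ltrMn2r #|F|.-1).
have -> : (#|F| ^ d.-1 * #|V|)%:R *+ #|F|.-1 = M *+ #|V| :> rat.
  by rewrite /M -!mulrnA mulnAC.
by rewrite -SC ltrDr.
Qed.
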